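(* Let $d,d'\in\mathcal D$ be two deterministic stationary policies, and write $(\mathbf P,\mathbf r,\boldsymbol\pi,J_\mu,J_{\mu,\sigma},\mathbf g)$ for the quantities $(\mathbf P^d,\mathbf r^d,\boldsymbol\pi^d,J^d_\mu,J^d_{\mu,\sigma},\mathbf g^d)$ of $d$ and $(\mathbf P',\mathbf r',\boldsymbol\pi',J'_\mu,J'_{\mu,\sigma})$ for those of $d'$. Then $$J'_{\mu,\sigma}-J_{\mu,\sigma}=\boldsymbol\pi'\Big[(\mathbf P'-\mathbf P)\mathbf g+\mathbf r'-\beta(\mathbf r'-J_\mu\mathbf 1)^2_\odot-\mathbf r+\beta(\mathbf r-J_\mu\mathbf 1)^2_\odot\Big]+\beta\,(J'_\mu-J_\mu)^2 .$$
   Context: Let $\mathcal S=\{1,\dots,S\}$ be a finite state space and $\mathcal A$ a finite action set. For $i,j\in\mathcal S$, $a\in\mathcal A$, let $p^a(i,j)\ge 0$ with $\sum_{j}p^a(i,j)=1$ be transition probabilities and $r(i,a)\in\mathbb R$ rewards. A deterministic stationary policy is a map $d:\mathcal S\to\mathcal A$; $\mathcal D$ denotes the (finite) set of such policies. Under $d$, $\mathbf P^d$ is the $S\times S$ matrix with entries $p^{d(i)}(i,j)$ and $\mathbf r^d$ is the column vector with entries $r(i,d(i))$. Standing assumption: for every $d\in\mathcal D$ the Markov chain with transition matrix $\mathbf P^d$ is irreducible, so it has a unique stationary distribution, the row vector $\boldsymbol\pi^d$ with $\boldsymbol\pi^d\mathbf P^d=\boldsymbol\pi^d$, $\boldsymbol\pi^d\mathbf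 1=1$, all of whose entries are strictly positive ($\mathbf 1$ is the all-ones column vector). Define the long-run mean $J^d_\mu=\boldsymbol\pi^d\mathbf r^d$, the steady-state variance $J^d_\sigma=\sum_i\pi^d(i)(r(i,d(i))-J^d_\mu)^2$, and, for a fixed weight $\beta>0$, the mean-variance combined metric $J^d_{\mu,\sigma}=J^d_\mu-\beta J^d_\sigma=\boldsymbol\pi^d\mathbf f^d$, where $f^d(i)=r(i,d(i))-\beta(r(i,d(i))-J^d_\mu)^2$. The performance potential $\mathbf g^d$ is any column vector solving the Poisson equation $\mathbf g^d=\mathbf f^d-J^d_{\mu,\sigma}\mathbf 1+\mathbf P^d\mathbf g^d$ (solutions exist and are unique up to adding a constant multiple of $\mathbf 1$). For a vector $\mathbf v$, $(\mathbf v)^2_\odot$ denotes its componentwise square. *)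

(* Defs.v *)
From mathcomp Require Import all_boot all_order all_algebra.
Set Implicit Arguments. Unset Strict Implicit. Unset Printing Implicit Defensive.
Import Order.TTheory GRing.Theory Num.Theory.
Local Open Scope ring_scope.

Section MDP.
Variables (R : realFieldType) (S : nat) (A : finType).

Definition Pmat (p : 'I_S -> A -> 'I_S -> R) (d : 'I_S -> A) : 'M[R]_S :=
  \matrix_(i, j) p i (d i) j.
Definition rvec (r : 'I_S -> A -> R) (d : 'I_S -> A) : 'cV[R]_S :=
  \col_i r i (d i).

Definition irreducible (P : 'M[R]_S) : Prop :=
  forall i j : 'I_S, exists k : nat, 0 < (P ^+ k) i j.

Definition stationary (P : 'M[R]_S) (pi : 'rV[R]_S) : Prop :=
  pi *m P = pi /\ \sum_i pi 0 i = 1.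

Definition sqv (v : 'cV[R]_S) : 'cV[R]_S := \col_i (v i 0) ^+ 2.

Definition Jmu (pi : 'rV[R]_S) (rv : 'cV[R]_S) : R := (pi *m rv) 0 0.
Definition Jsigma (pi : 'rV[R]_S) (rv : 'cV[R]_S) : R :=
  \sum_i pi 0 i * (rv i 0 - Jmu pi rv) ^+ 2.
Definition Jms (beta : R) (pi : 'rV[R]_S) (rv : 'cV[R]_S) : R :=
  Jmu pi rv - beta * Jsigma pi rv.
Definition fvec (beta : R) (pi : 'rV[R]_S) (rv : 'cV[R]_S) : 'cV[R]_S :=
  \col_i (rv i 0 - beta * (rv i 0 - Jmu pi rv) ^+ 2).

Definition poisson (beta : R) (P : 'M[R]_S) (pi : 'rV[R]_S) (rv : 'cV[R]_S)
  (g : 'cV[R]_S) : Prop :=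
  g = fvec beta pi rv - Jms beta pi rv *: const_mx 1 + P *m g.
End MDP.

(* Main.v *)
Require Import Defs.
From mathcomp Require Import all_boot all_order all_algebra.
From mathcomp Require Import ring.
Import Order.TTheory GRing.Theory Num.Theory.
Local Open Scope ring_scope.

Lemma zh (V : zmodType) (x y z : V) : z = x - y + z - x + y.
Proof. by rewrite -(addrA x) (addrC x) addrK (addrC (-y)) subrK. Qed.

Theorem lemma1 (R : realFieldType) (S : nat) (A : finType)
  (p : 'I_S -> A -> 'I_S -> R) (r : 'I_S -> A -> R) (beta : R)
  (p_ge0 : forall i a j, 0 <= p i a j)
  (p_sum1 : forall i a, \sum_j p i a j = 1)
  (irr : forall d : 'I_S -> A, irreducible (Pmat p d))
  (beta_gt0 : 0 < beta)
  (d d' : 'I_S -> A) (pi pi' : 'rV[R]_S)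
  (pi_st : stationary (Pmat p d) pi) (pi'_st : stationary (Pmat p d') pi')
  (pi_pos : forall i, 0 < pi 0 i) (pi'_pos : forall i, 0 < pi' 0 i)
  (g : 'cV[R]_S) (g_poisson : poisson beta (Pmat p d) pi (rvec r d) g) :
  Jms beta pi' (rvec r d') - Jms beta pi (rvec r d) =
    (pi' *m ((Pmat p d' - Pmat p d) *m g + rvec r d'
             - beta *: sqv (rvec r d' - Jmu pi (rvec r d) *: const_mx 1)
             - rvec r d
             + beta *: sqv (rvec r d - Jmu pi (rvec r d) *: const_mx 1))) 0 0
    + beta * (Jmu pi' (rvec r d') - Jmu pi (rvec r d)) ^+ 2.
Proof.
case: pi'_st => st1 st2.
set P := Pmat p d; set P' := Pmat p d'; set rv := rvec r d; set rv' := rvec r d'.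
set J := Jmu pi rv; set M := Jms beta pi rv.
have Hpg : P *m g = g - fvec beta pi rv + M *: const_mx 1.
  by rewrite {2}g_poisson -zh.
have Hpi : pi' *m (P' *m g) = pi' *m g by rewrite mulmxA st1.
rewrite mulmxBl !(mulmxDr, mulmxBr, mulmxN) Hpi Hpg.
rewrite /Jms /Jsigma -/J -/M.
set J' := Jmu pi' rv'.
have HJ' : J' = \sum_i pi' 0 i * rv' i 0 by rewrite /J' /Jmu mxE.
rewrite !mxE.
have E : forall K : R, K = \sum_i pi' 0 i * K by move=> K; rewrite -mulr_suml st2 mul1r.
rewrite {1}HJ' {1}(E M) (E (beta * (J' - J) ^+ 2)) mulr_sumr.
rewrite -!(sumrB, big_split) /=.
apply/eqP; rewrite -subr_eq0 -sumrB; apply/eqP.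


transitivity (\sum_i pi' 0 i * (rv' i 0 - J') * (2 * beta * (J' - J))).
  apply: eq_bigr => i _; rewrite /fvec /sqv !mxE /= -/J; ring.
rewrite -mulr_suml.
have -> : \sum_i pi' 0 i * (rv' i 0 - J') = 0.
  under eq_bigr => i _ do rewrite mulrBr.
  by rewrite sumrB -mulr_suml st2 mul1r -HJ' subrr.
by rewrite mul0r.
Qed.
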